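(* Let $G=(V,E)$ have $|V|=2$ (i.e. $G$ is the path $\mathcal P_2$), let $N=3$, $\varepsilon\in[0,\frac12]$, $\gamma\in(0,1)$ and $s_0\in S_{nc}$. Then $\Gamma_3(G|s_0,\gamma,\varepsilon)$ admits a positional trigger strategies profile $\bar\sigma$ (which is then unique) if and only if $\varepsilon\in[0,\frac12)$ and $\gamma\in\left[\sqrt{\frac{\varepsilon}{1-\varepsilon}},\frac{1}{2-2\varepsilon}\right]$.
   Context: Setting. $G=(V,E)$ is a finite, simple, connected, undirected graph; $N\ge 3$ is an integer; $\gamma\in(0,1)$ and $\varepsilon\in[0,\frac1{N-1}]$ are parameters. There are $N$ tokens: cops $C_1,\dots,C_{N-1}$ (tokens $1,\dots,N-1$) and the robber $R$ (token $N$). A state is $s=(x^1,\dots,x^N,n)$ where $x^i\in V$ is the position of token $i$ and $n\in\{1,\dots,N\}$ is the token that moves next; $S^n$ denotes the set of states with token $n$ to move. A state is a capture state if $x^i=x^N$ for some $i\le N-1$; $S_{nc}$ is the set of noncapture states. In each turn exactly one token, the one to move, moves to a vertex of its closed neighbourhood (it may stay put); the order of moves is $C_1,C_2,\dots,C_{N-1},R,C_1,\dots$. Starting from an initial state $s_0\in S_{nc}$ at time $0$, the capture time is the first time $t$ at which a capture state occurs (infinite if never); after capture the game is over. Auxiliary games. For $m\in\{1,\dots,N\}$, $\Gamma_N^m(G|s_0,\gamma,\varepsilon)$ is the two-player zero-sum game in which player $P_m$ controls token $m$ and player $P_{-m}$ controls all other tokens, with the following payoff to $P_m$ ($P_{-m}$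 receives its negative): $0$ if no capture ever occurs; if capture occurs at time $t$: for $m=N$, $-\gamma^t$; for $m\le N-1$, $\frac{1-\varepsilon}{K}\gamma^t$ if exactly $K\in\{1,\dots,N-2\}$ cops, including $C_m$, are on the robber's vertex, $\frac{\varepsilon}{N-K-1}\gamma^t$ if exactly $K\in\{1,\dots,N-2\}$ cops, not including $C_m$, are on the robber's vertex, and $\frac{\gamma^t}{N-1}$ if all $N-1$ cops are on the robber's vertex. $\Gamma^N_N$ is the modified cops-and-robber (CR) game. A pure positional strategy for token $n$ maps each state in $S^n\cap S_{nc}$ to an allowed next vertex. Each $\Gamma^m_N$ has optimal pure positional strategies (optimal from every initial state). For $m,n\in\{1,\dots,N\}$, $\phi^n_m$ denotes the strategy of token $n$ in a chosen pair of optimal pure positional strategies of $\Gamma^m_N$ (so $\phi^m_m$ is $P_m$'s optimal strategy and $(\phi^n_m)_{n\ne m}$ is $P_{-m}$'s). $\widehat\Sigma^n$ is the set of pure positional strategies of token $n$ that are components of optimal strategy pairs of $\Gamma^N_N$ (CR-optimal strategies). Trigger strategies. Given a choice of $(\phi^n_m)_{n,m}$, the trigger strategies profile $\bar\sigma=(\bar\sigma^1,\dots,\bar\sigma^N)$ of the $N$-player SCAR game $\Gamma_N(G|s_0,\gamma,\varepsilon)$ (same board and moves; player $n$ controls token $n$) is: token $n$, at current state $s$, plays $\phi^n_n(s)$ as long as every other player $m$ has followed $\phi^m_m$, and plays $\phi^n_m(s)$ from the moment a player $m\neq n$ deviates from $\phi^m_m$. Different choices of the optimal strategies give different trigger strategies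 profiles. $\bar\sigma$ is called positional if for all $n,m\in\{1,\dots,N\}$ there is $\widehat\sigma^n\in\widehat\Sigma^n$ with $\phi^n_m(s)=\widehat\sigma^n(s)$ for every state $s\in S^n\cap S_{nc}$ reachable from $s_0$ by a finite sequence of legal moves passing only through noncapture states; otherwise $\bar\sigma$ is nonpositional. *)

(* Defs.v *)
From Stdlib Require Import Reals ClassicalEpsilon.
From mathcomp Require Import ssreflect ssrfun ssrbool eqtype ssrnat seq choice.
From mathcomp Require Import fintype finfun finset fingraph.

Set Implicit Arguments.
Unset Strict Implicit.
Unset Printing Implicit Defensive.

(* The paper's number of tokens N is represented as n.+1:
   tokens are the elements of 'I_n.+1; tokens 0,...,n-1 are the cops
   C_1,...,C_n (paper's tokens 1..N-1) and token ord_max (= n) is the robber R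
   (paper's token N). *)

Section SCAR.
Variables (V : finType) (e : rel V) (n : nat).

Definition simple_connected_graph : Prop :=
  symmetric e /\ irreflexive e /\ (forall x y : V, connect e x y).

Definition cnbr (x y : V) : bool := (x == y) || e x y.

Definition token := 'I_n.+1.
Definition robber : token := ord_max.

Definition state := ({ffun token -> V} * token)%type.

Definition pos (s : state) (i : token) : V := s.1 i.
Definition mover (s : state) : token := s.2.

Definition is_capture (s : state) : bool :=
  [exists i : token, (i != robber) && (pos s i == pos s robber)].

Definition cops_on (s : state) : {set token} :=
  [set i : token | (i != robber) && (pos s i == pos s robber)].

Definition move (s : state) (v : V) : state :=
  ([ffun i => if i == mover s then v else pos s i], ordS (mover s)).

(* pure (history-dependent) strategies: past history -> current state -> next vertex;
   pure positional strategies: state -> next vertex *)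
Definition hstrat := seq state -> state -> V.
Definition pstrat := state -> V.
Definition hpos (f : pstrat) : hstrat := fun _ s => f s.

Definition legal_h (i : token) (f : hstrat) : Prop :=
  forall h s, mover s = i -> ~~ is_capture s -> cnbr (pos s i) (f h s).
Definition legal_p (i : token) (f : pstrat) : Prop :=
  forall s, mover s = i -> ~~ is_capture s -> cnbr (pos s i) (f s).

Fixpoint run (P : token -> hstrat) (s0 : state) (t : nat) : seq state * state :=
  match t with
  | 0 => ([::], s0)
  | t'.+1 => let hs := run P s0 t' in
             if is_capture hs.2 then hs
             else (rcons hs.1 hs.2, move hs.2 (P (mover hs.2) hs.1 hs.2))
  end.

Definition state_at P s0 t : state := (run P s0 t).2.

Section Payoff.
Variables (gamma eps : R).

Definition coef (m : token) (s : state) : R :=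
  let K := #|cops_on s| in
  if m == robber then (-1)%R
  else if K == n then (/ INR n)%R
  else if m \in cops_on s then ((1 - eps) / INR K)%R
  else (eps / INR (n - K))%R.

Definition payoff (m : token) (P : token -> hstrat) (s0 : state) : R :=
  match excluded_middle_informative
          (exists t, [pred t | is_capture (state_at P s0 t)] t) with
  | left H => let t := ex_minn H in (gamma ^ t * coef m (state_at P s0 t))%R
  | right _ => 0%R
  end.

Definition upd (P : token -> hstrat) (m : token) (f : hstrat) : token -> hstrat :=
  fun i => if i == m then f else P i.

(* phi : token -> pstrat is a pair of optimal pure positional strategies of
   Gamma^m_N (phi m for P_m, (phi i)_{i<>m} for P_{-m}), optimal from every
   initial noncapture state, against all pure strategies. *)
Definition optimal_pair (m : token) (phi : token -> pstrat) : Prop :=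
  (forall i, legal_p i (phi i)) /\
  forall s0 : state, ~~ is_capture s0 ->
    (forall f : hstrat, legal_h m f ->
        (payoff m (upd (fun i => hpos (phi i)) m f) s0 <=
         payoff m (fun i => hpos (phi i)) s0)%R) /\
    (forall Q : token -> hstrat, (forall i, i != m -> legal_h i (Q i)) ->
        (payoff m (fun i => hpos (phi i)) s0 <=
         payoff m (upd Q m (hpos (phi m))) s0)%R).

(* CR-optimal strategies of token i (components of optimal pairs of Gamma^N_N),
   as strategies on S^i ∩ S_nc *)
Definition CR_optimal (i : token) (f : pstrat) : Prop :=
  exists phi, optimal_pair robber phi /\
    forall s, mover s = i -> ~~ is_capture s -> phi i s = f s.

Inductive reachable (s0 : state) : state -> Prop :=
| reach0 : reachable s0 s0
| reachS s v : reachable s0 s -> ~~ is_capture s -> cnbr (pos s (mover s)) v ->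
               reachable s0 (move s v).

(* a choice of optimal strategies phi m i = phi^i_m, defining a trigger profile *)
Definition trigger_choice (phi : token -> token -> pstrat) : Prop :=
  forall m, optimal_pair m (phi m).

Definition positional_trigger (s0 : state) (phi : token -> token -> pstrat) : Prop :=
  trigger_choice phi /\
  forall i m : token, exists f, CR_optimal i f /\
    forall s, reachable s0 s -> mover s = i -> ~~ is_capture s -> phi m i s = f s.

End Payoff.
End SCAR.

(* Main.v *)
From Pilot Require Import Defs.
From Stdlib Require Import Reals.
From mathcomp Require Import ssreflect ssrfun ssrbool eqtype ssrnat fintype.
From Stdlib Require Import Lra ClassicalEpsilon.
From mathcomp Require Import finfun finset seq fingraph path.
Import Pilot.Defs.
Set Implicit Arguments.
Unset Strict Implicit.
Unset Printing Implicit Defensive.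

Section P2.
Variables (V : finType) (e : rel V).
Hypothesis hV : #|V| = 2.
Hypothesis hsc : simple_connected_graph e.

Notation st := (state V 2).
Definition rb : 'I_3 := robber 2.
Definition t0 : 'I_3 := ord0.
Definition t1 : 'I_3 := Ordinal (isT : 1 < 3).

Lemma tok_cases (j : 'I_3) : j = t0 \/ j = t1 \/ j = rb.
Proof.
case: j => [[|[|[|k]]] Hk].
- by left; apply/val_inj.
- by right; left; apply/val_inj.
- by right; right; apply/val_inj.
- by [].
Qed.

Lemma two (x y v : V) : x != y -> v = x \/ v = y.
Proof.
move=> xy; case: (eqVneq v x) => [->|vx]; first by left.
case: (eqVneq v y) => [->|vy]; first by right.
exfalso.
have U : uniq [:: x; y; v] by rewrite /= !inE negb_or xy eq_sym vx eq_sym vy.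
have := max_card (mem [:: x; y; v]).
by rewrite (card_uniqP U) hV.
Qed.

Lemma adj (x y : V) : x != y -> e x y.
Proof.
move=> xy; case: hsc => _ [irr con].
have /connectP [p pth lst] := con x y.
case: p pth lst => [|z p] /=; first by move=> _ E; rewrite E eqxx in xy.
move=> /andP [exz _] _.
case: (two z xy) => E; last by rewrite -E.
by rewrite E irr in exz.
Qed.

Definition cfg (c r : V) (i : 'I_3) : st := ([ffun j => if j == rb then r else c], i).

Lemma nc_pos (s : st) : ~~ is_capture s ->
  pos s t0 != pos s rb /\ pos s t1 = pos s t0.
Proof.
move=> /existsPn H.
have H0 := H t0; have H1 := H t1.
rewrite /= in H0 H1.
split => //.
by case: (two (pos s t1) H0) => // E; rewrite E eqxx in H1.
Qed.

Lemma nc_cfg (s : st) : ~~ is_capture s ->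
  s = cfg (pos s t0) (pos s rb) (mover s).
Proof.
move=> /nc_pos [_ E]; case: s E => f i /= E; rewrite /cfg; congr pair.
apply/ffunP => j; rewrite ffunE.
by case: (tok_cases j) => [->|[->|->]].
Qed.

Lemma cfg_nc c r i : c != r -> ~~ is_capture (cfg c r i).
Proof.
move=> cr; apply/existsPn => j; rewrite /pos /cfg /= !ffunE eqxx.
by case: (tok_cases j) => [->|[->|->]]; rewrite //= eq_sym (negbTE cr) ?andbF.
Qed.

Definition stayv (c r : V) (i : 'I_3) := if i == rb then r else c.
Definition othv (c r : V) (i : 'I_3) := if i == rb then c else r.
Definition capst c r i := move (cfg c r i) (othv c r i).
Definition coefv (eps : R) (m i : 'I_3) : R :=
  if m == rb then (-1)%R else if i == rb then (/2)%R else if m == i then (1-eps)%R else eps.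

Lemma ordS0 : ordS t0 = t1. Proof. by apply/val_inj. Qed.
Lemma ordS1 : ordS t1 = rb. Proof. by apply/val_inj. Qed.
Lemma ordS2 : ordS rb = t0. Proof. by apply/val_inj. Qed.

Lemma move_stay c r i : move (cfg c r i) (stayv c r i) = cfg c r (ordS i).
Proof.
rewrite /move /cfg /stayv /pos /mover /=; congr pair; apply/ffunP => j; rewrite !ffunE.
by case: (eqVneq j i) => [->|//]; case: (i == rb).
Qed.

Lemma cops_capst c r i : c != r ->
  cops_on (capst c r i) = if i == rb then [set t0; t1] else [set i].
Proof.
move=> cr; apply/setP => j; rewrite /cops_on /capst /move /cfg /othv /pos /mover /=.
case: (tok_cases i) => [->|[->|->]]; case: (tok_cases j) => [->|[->|->]];
  rewrite /= ?in_set1 ?in_set2 in_set !ffunE /= ?eqxx ?(negbTE cr) //.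
Qed.

Lemma capst_cap c r i : c != r -> is_capture (capst c r i).
Proof.
move=> cr; have : cops_on (capst c r i) != set0.
  rewrite cops_capst //; case: (i == rb); apply/set0Pn.
  - by exists t0; rewrite ?in_set1 ?in_set2 eqxx.
  - by exists i; rewrite ?in_set1 ?in_set2 eqxx.
case/set0Pn => j; rewrite /cops_on in_set => H.
by apply/existsP; exists j.
Qed.

Lemma coef_capst eps c r m i : c != r -> coef eps m (capst c r i) = coefv eps m i.
Proof.
move=> cr; rewrite /coef /coefv cops_capst //.
have c1 : #|[set t0; t1]| = 2 by rewrite cards2.
case: (tok_cases i) => [->|[->|->]]; case: (tok_cases m) => [->|[->|->]];
  rewrite ?c1 ?cards1 /=.
all: rewrite ?in_set1 /=; field.
Qed.

Lemma pos_cfg c r i j : pos (cfg c r i) j = if j == rb then r else c.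
Proof. by rewrite /pos /cfg /= ffunE. Qed.

Lemma mover_cfg c r i : mover (cfg c r i) = i.
Proof. by []. Qed.

Lemma so_two c r i v : c != r -> v = stayv c r i \/ v = othv c r i.
Proof.
move=> cr; rewrite /stayv /othv; case: (i == rb); case: (two v cr) => ->; auto.
Qed.

Lemma state_at0 (P : 'I_3 -> hstrat V 2) s0 : state_at P s0 0 = s0.
Proof. by []. Qed.

Lemma state_atS (P : 'I_3 -> hstrat V 2) s0 t : state_at P s0 t.+1 =
  if is_capture (state_at P s0 t) then state_at P s0 t
  else move (state_at P s0 t) (P (mover (state_at P s0 t)) (run P s0 t).1 (state_at P s0 t)).
Proof. by rewrite /state_at /=; case: is_capture. Qed.

Lemma step (P : 'I_3 -> hstrat V 2) s0 t c r i : c != r -> state_at P s0 t = cfg c r i ->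
  (P i (run P s0 t).1 (cfg c r i) = stayv c r i /\ state_at P s0 t.+1 = cfg c r (ordS i)) \/
  (P i (run P s0 t).1 (cfg c r i) = othv c r i /\ state_at P s0 t.+1 = capst c r i).
Proof.
move=> cr H; rewrite state_atS H (negbTE (cfg_nc i cr)) mover_cfg.
case: (so_two i (P i (run P s0 t).1 (cfg c r i)) cr) => E; rewrite E.
- by left; split => //; rewrite move_stay.
- by right.
Qed.

Lemma payoff_cases gamma eps m (P : 'I_3 -> hstrat V 2) s0 :
  (payoff gamma eps m P s0 = 0%R /\ forall t, ~~ is_capture (state_at P s0 t)) \/
  exists t, is_capture (state_at P s0 t) /\ (forall k, k < t -> ~~ is_capture (state_at P s0 k)) /\
    payoff gamma eps m P s0 = (gamma ^ t * coef eps m (state_at P s0 t))%R.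
Proof.
rewrite /payoff; case: excluded_middle_informative => [H|H].
- right; exists (ex_minn H); case: ex_minnP => t Ht Hmin; split => //; split => // k kt.
  apply/negP => Hk; have := Hmin k Hk; by rewrite leqNgt kt.
- left; split => // t; apply/negP => Ht; apply: H; by exists t.
Qed.

Lemma pay_at gamma eps m (P : 'I_3 -> hstrat V 2) s0 t :
  is_capture (state_at P s0 t) -> (forall k, k < t -> ~~ is_capture (state_at P s0 k)) ->
  payoff gamma eps m P s0 = (gamma ^ t * coef eps m (state_at P s0 t))%R.
Proof.
move=> Ht Hb; case: (payoff_cases gamma eps m P s0) => [[_ H]|[t' [Ht' [Hb' ->]]]].
- by have := H t; rewrite Ht.
- have -> : t' = t => //.
  apply/eqP; rewrite eqn_leq; apply/andP; split; rewrite leqNgt; apply/negP => L.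
  + by rewrite (negbTE (Hb' _ L)) in Ht.
  + by rewrite (negbTE (Hb _ L)) in Ht'.
Qed.

Lemma pay_leaf gamma eps m (P : 'I_3 -> hstrat V 2) s0 t c r i : c != r ->
  state_at P s0 t = capst c r i -> (forall k, k < t -> ~~ is_capture (state_at P s0 k)) ->
  payoff gamma eps m P s0 = (gamma ^ t * coefv eps m i)%R.
Proof.
move=> cr H Hb; rewrite (@pay_at gamma eps m P s0 t).
- by rewrite H coef_capst.
- by rewrite H capst_cap.
- exact: Hb.
Qed.

Lemma robber_lb gamma eps (P : 'I_3 -> hstrat V 2) s0 K : (0 < gamma < 1)%R ->
  (forall k, k < K -> ~~ is_capture (state_at P s0 k)) ->
  (- gamma ^ K <= payoff gamma eps rb P s0)%R.
Proof.
move=> [g0 g1] Hb; case: (payoff_cases gamma eps rb P s0) => [[-> _]|[t [Ht [_ ->]]]].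
- have := pow_le gamma K; lra.
- have Kt : K <= t by rewrite leqNgt; apply/negP => L; rewrite (negbTE (Hb _ L)) in Ht.
  have -> : coef eps rb (state_at P s0 t) = (-1)%R by rewrite /coef eqxx.
  rewrite -(subnKC Kt) pow_add.
  have := pow_le gamma K; have := pow_le gamma (t - K).
  have : (gamma ^ (t - K) <= 1)%R by rewrite -(pow1 (t - K)); apply: pow_incr; lra.
  move=> *; nra.
Qed.

Definition capt : pstrat V 2 := fun s => pos s rb.

Lemma capt_cfg c r i : capt (cfg c r i) = r.
Proof. by rewrite /capt pos_cfg eqxx. Qed.

Lemma nc_tok (s : st) i : ~~ is_capture s -> i != rb -> pos s i != pos s rb.
Proof. by move=> /existsPn H ir; have := H i; rewrite ir. Qed.

Lemma legal_capt i : legal_p e i capt.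
Proof.
move=> s _ ns; rewrite /cnbr /capt; case: (eqVneq i rb) => [->|ir]; first by rewrite eqxx.
by rewrite adj ?orbT // nc_tok.
Qed.

Lemma legal_hcapt i : legal_h e i (hpos capt).
Proof. by move=> h s; apply: legal_capt. Qed.

Lemma legal_stay i : legal_h e i (hpos (fun s : st => pos s i)).
Proof. by move=> h s _ _; rewrite /cnbr eqxx. Qed.

Ltac ncs H1 H2 := let k := fresh in let Hk := fresh in
  move=> k Hk; case: k Hk => [|[|[|k]]] Hk //;
  rewrite ?state_at0 ?H1 ?H2; apply: cfg_nc; assumption.

Lemma stay_ne_r c r i : c != r -> i != rb -> stayv c r i <> r.
Proof. by move=> cr ir; rewrite /stayv (negbTE ir) => E; rewrite E eqxx in cr. Qed.
Lemma oth_rb c r : othv c r rb = c.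
Proof. by rewrite /othv eqxx. Qed.
Lemma stay_rb c r : stayv c r rb = r.
Proof. by rewrite /stayv eqxx. Qed.
Lemma oth_cop c r i : i != rb -> othv c r i = r.
Proof. by move=> ir; rewrite /othv (negbTE ir). Qed.
Lemma stay_cop c r i : i != rb -> stayv c r i = c.
Proof. by move=> ir; rewrite /stayv (negbTE ir). Qed.

Lemma coefv_rb eps i : coefv eps rb i = (-1)%R.
Proof. by rewrite /coefv eqxx. Qed.

Lemma CR_capt_cfg gamma eps phi c r i : (0 < gamma < 1)%R -> optimal_pair e gamma eps rb phi ->
  c != r -> phi i (cfg c r i) = r.
Proof.
move=> [g0 g1] [Hleg Hopt] cr.
have [H1 H2] := Hopt _ (cfg_nc i cr).
case: (eqVneq i rb) => [irb|ir].
- subst i.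
  case: (so_two rb (phi rb (cfg c r rb)) cr); rewrite ?stay_rb ?oth_rb // => E.
  exfalso.
  have L : payoff gamma eps rb (fun i => hpos (phi i)) (cfg c r rb) = (gamma ^ 1 * -1)%R.
    case: (@step (fun i => hpos (phi i)) (cfg c r rb) 0 c r rb cr erefl).
    + by rewrite /hpos E stay_rb => -[F _]; rewrite F eqxx in cr.
    + move=> [_ S1]; rewrite (pay_leaf gamma eps rb cr S1) ?coefv_rb //.
      move=> [|k] Hk //; rewrite state_at0; exact: cfg_nc.
  have := H1 _ (@legal_hcapt rb); rewrite L.
  set P := upd _ _ _.
  have S1 : state_at P (cfg c r rb) 1 = cfg c r (ordS rb).
    case: (@step P (cfg c r rb) 0 c r rb cr erefl) => -[F S1] //.
    by move: F; rewrite /P /upd eqxx /hpos capt_cfg oth_rb => F; rewrite F eqxx in cr.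
  have : (- gamma ^ 2 <= payoff gamma eps rb P (cfg c r rb))%R.
    apply: robber_lb; first lra.
    ncs S1 S1.
  simpl; nra.
- case: (so_two i (phi i (cfg c r i)) cr); rewrite ?oth_cop ?stay_cop // => E.
  exfalso.
  have := H2 (fun _ => hpos capt) (fun j _ => @legal_hcapt j).
  set P := upd _ _ _.
  have R : payoff gamma eps rb P (cfg c r i) = (gamma ^ 1 * -1)%R.
    case: (@step P (cfg c r i) 0 c r i cr erefl) => -[F S1].
    + by move: F; rewrite /P /upd (negbTE ir) /hpos capt_cfg stay_cop // => F; rewrite F eqxx in cr.
    + rewrite (pay_leaf gamma eps rb cr S1) ?coefv_rb //.
      move=> [|k] Hk //; rewrite state_at0; exact: cfg_nc.
  rewrite R.
  have S1 : state_at (fun i => hpos (phi i)) (cfg c r i) 1 = cfg c r (ordS i).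
    case: (@step (fun i => hpos (phi i)) (cfg c r i) 0 c r i cr erefl) => -[F S1] //.
    by move: F; rewrite /hpos E oth_cop // => F; rewrite F eqxx in cr.
  have : (- gamma ^ 2 <= payoff gamma eps rb (fun i => hpos (phi i)) (cfg c r i))%R.
    apply: robber_lb; first lra.
    ncs S1 S1.
  simpl; nra.
Qed.

Lemma CR_capt gamma eps phi : (0 < gamma < 1)%R -> optimal_pair e gamma eps rb phi ->
  forall s, ~~ is_capture s -> phi (mover s) s = pos s rb.
Proof.
move=> g H s ns; have cr := (nc_pos ns).1.
have E : s = cfg (pos s t0) (pos s rb) (mover s) by exact: nc_cfg.
rewrite {2}E; exact: (CR_capt_cfg _ g H cr).
Qed.

Lemma cap_abs (P : 'I_3 -> hstrat V 2) s0 k d :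
  is_capture (state_at P s0 k) -> is_capture (state_at P s0 (k + d)).
Proof.
move=> H; elim: d => [|d IH]; first by rewrite addn0.
by rewrite addnS state_atS IH.
Qed.

Lemma nc_before (P : 'I_3 -> hstrat V 2) s0 t c r i : c != r ->
  state_at P s0 t = cfg c r i -> forall k, k < t.+1 -> ~~ is_capture (state_at P s0 k).
Proof.
move=> cr H k Hk; apply/negP => C.
have := @cap_abs P s0 k (t - k) C; rewrite subnKC // H.
by rewrite (negbTE (cfg_nc i cr)).
Qed.

Lemma pay_leaf2 gamma eps m (P : 'I_3 -> hstrat V 2) s0 t c r i : c != r ->
  state_at P s0 t = cfg c r i -> state_at P s0 t.+1 = capst c r i ->
  payoff gamma eps m P s0 = (gamma ^ t.+1 * coefv eps m i)%R.
Proof. move=> cr H H1; apply: (pay_leaf _ _ _ cr H1); exact: nc_before cr H. Qed.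

Lemma robber_lb2 gamma eps (P : 'I_3 -> hstrat V 2) s0 t c r i : (0 < gamma < 1)%R -> c != r ->
  state_at P s0 t = cfg c r i -> (- gamma ^ t.+1 <= payoff gamma eps rb P s0)%R.
Proof. move=> g cr H; apply: robber_lb g _; exact: nc_before cr H. Qed.

Lemma tokE : ((t0 == rb) = false) * ((t1 == rb) = false) * ((rb == t0) = false) *
  ((rb == t1) = false) * ((t0 == t1) = false) * ((t1 == t0) = false).
Proof. by []. Qed.

Lemma stE c r : (stayv c r t0 = c) * (stayv c r t1 = c) * (stayv c r rb = r) *
  (othv c r t0 = r) * (othv c r t1 = r) * (othv c r rb = c).
Proof. by rewrite /stayv /othv !tokE eqxx. Qed.

Ltac kill F cr := move: F; rewrite /upd /hpos ?tokE ?eqxx ?capt_cfg ?stE => F; move: cr; rewrite F eqxx; done.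

Ltac expl n P s0 cr :=
  match n with S ?n' =>
  match goal with
  | H : state_at P s0 ?t = cfg ?c ?r ?i |- context [payoff ?g ?eps ?m P s0] =>
    let F := fresh "F" in let H' := fresh "H'" in
    case: (@step P s0 t c r i cr H) => -[F H'];
    rewrite ?ordS0 ?ordS1 ?ordS2 in H';
    [ first [ by exfalso; kill F cr | clear H F; expl n' P s0 cr ]
    | first [ by exfalso; kill F cr | rewrite (@pay_leaf2 g eps m P s0 t c r i cr H H'); clear H H' F ] ]
  end end.

Ltac run_all cr :=
  repeat match goal with |- context [payoff ?g ?eps ?m ?P (cfg ?c ?r ?i)] =>
    let H0 := fresh "H0" in
    have H0 : state_at P (cfg c r i) 0 = cfg c r i by [];
    expl 4 P (cfg c r i) cr end.

Lemma opt_capt gamma eps m : (0 <= eps <= 1/2)%R -> (0 < gamma < 1)%R ->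
  (eps <= (1 - eps) * gamma ^ 2)%R -> ((1 - eps) * gamma ^ 2 <= gamma / 2)%R ->
  optimal_pair e gamma eps m (fun _ => capt).
Proof.
move=> [e0 e1] [g0 g1] A B.
have D1 : (2 * eps <= gamma)%R by simpl in A; nra.
have D2 : (eps <= (1 - eps) * gamma)%R by simpl in A; nra.
split; first by move=> i; exact: legal_capt.
move=> s ns; have cr := (nc_pos ns).1.
move: (pos s t0) (pos s rb) (mover s) cr (nc_cfg ns) => c r i cr ->.
case: (tok_cases m) => [->|[->|->]]; split.
1,2,3,4,5: move=> Q _; case: (tok_cases i) => [->|[->|->]]; run_all cr;
   rewrite /coefv ?tokE ?eqxx; simpl; nra.
move=> Q _.
case: (tok_cases i) => [->|[->|->]]; run_all cr; rewrite /coefv ?tokE ?eqxx;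
  set P := upd Q rb (hpos capt).
- have H0 : state_at P (cfg c r t0) 0 = cfg c r t0 by [].
  have := robber_lb2 eps (conj g0 g1) cr H0; simpl; lra.
- have H0 : state_at P (cfg c r t1) 0 = cfg c r t1 by [].
  have := robber_lb2 eps (conj g0 g1) cr H0; simpl; lra.
- have H0 : state_at P (cfg c r rb) 0 = cfg c r rb by [].
  case: (step cr H0) => -[F H1].
  + have := robber_lb2 eps (conj g0 g1) cr H1; simpl; lra.
  + exfalso; move: F; rewrite /P => F; kill F cr.
Qed.

Lemma reach_succ s0 c r i : c != r -> reachable e s0 (cfg c r i) -> reachable e s0 (cfg c r (ordS i)).
Proof.
move=> cr H; rewrite -move_stay; apply: reachS => //; first exact: cfg_nc.
by rewrite mover_cfg pos_cfg /stayv /cnbr; case: (i == rb); rewrite eqxx.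
Qed.

Lemma reach_all c r i j : c != r -> reachable e (cfg c r i) (cfg c r j).
Proof.
move=> cr.
have R0 := reach0 e (cfg c r i).
have R1 := reach_succ cr R0.
have R2 := reach_succ cr R1.
case: (tok_cases i) => [E|[E|E]]; rewrite E in R0 R1 R2 *; rewrite ?ordS0 ?ordS1 ?ordS2 ?ordS0 ?ordS1 in R1 R2;
  case: (tok_cases j) => [->|[->|->]]; assumption.
Qed.

Lemma pt_capt gamma eps s0 phi : (0 < gamma < 1)%R -> positional_trigger e gamma eps s0 phi ->
  forall m i s, reachable e s0 s -> mover s = i -> ~~ is_capture s -> phi m i s = pos s rb.
Proof.
move=> g [_ H] m i s Rs Ms ns.
have [f [[phi' [Hopt Hf]] Hag]] := H i m.
rewrite (Hag s Rs Ms ns) -(Hf s Ms ns); subst i; exact: (CR_capt g Hopt ns).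
Qed.

Lemma step_st (P : 'I_3 -> hstrat V 2) s0 t c r i : c != r -> state_at P s0 t = cfg c r i ->
  P i (run P s0 t).1 (cfg c r i) = stayv c r i -> state_at P s0 t.+1 = cfg c r (ordS i).
Proof.
move=> cr H E; case: (step cr H) => -[F H'] //; move: F; rewrite E /stayv /othv.
by case: (i == rb) => F; move: cr; rewrite F eqxx.
Qed.

Lemma step_ot (P : 'I_3 -> hstrat V 2) s0 t c r i : c != r -> state_at P s0 t = cfg c r i ->
  P i (run P s0 t).1 (cfg c r i) = othv c r i -> state_at P s0 t.+1 = capst c r i.
Proof.
move=> cr H E; case: (step cr H) => -[F H'] //; move: F; rewrite E /stayv /othv.
by case: (i == rb) => F; move: cr; rewrite F eqxx.
Qed.

Lemma necessity gamma eps c r i0 phi : (0 < gamma < 1)%R -> c != r ->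
  positional_trigger e gamma eps (cfg c r i0) phi ->
  (eps <= (1 - eps) * gamma ^ 2)%R /\ ((1 - eps) * gamma ^ 2 <= gamma / 2)%R.
Proof.
move=> [g0 g1] cr pt.
have Kn : forall k, phi t0 k (cfg c r k) = r.
  move=> k; rewrite (pt_capt (conj g0 g1) pt) ?pos_cfg ?eqxx //; first exact: reach_all.
  exact: cfg_nc.
have [_ Hopt] := (pt.1 t0).
split.
- have [_ H2] := Hopt _ (cfg_nc t1 cr).
  have := H2 (fun j => hpos (fun s => pos s j)) (fun j _ => @legal_stay j).
  set P1 := (fun i => hpos (phi t0 i)); set P2 := upd _ _ _.
  have H0 : state_at P1 (cfg c r t1) 0 = cfg c r t1 by [].
  have H1 := step_ot cr H0 (ltac:(by rewrite /P1 /hpos Kn stE)).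
  rewrite (pay_leaf2 _ _ _ cr H0 H1).
  have J0 : state_at P2 (cfg c r t1) 0 = cfg c r t1 by [].
  have J1 := step_st cr J0 (ltac:(by rewrite /P2 /upd /hpos tokE pos_cfg tokE stE)).
  rewrite ordS1 in J1.
  have J2 := step_st cr J1 (ltac:(by rewrite /P2 /upd /hpos tokE pos_cfg eqxx stE)).
  rewrite ordS2 in J2.
  have J3 := step_ot cr J2 (ltac:(by rewrite /P2 /upd /hpos eqxx Kn stE)).
  rewrite (pay_leaf2 _ _ _ cr J2 J3) /coefv !tokE eqxx /=.
  nra.
- have [_ H2] := Hopt _ (cfg_nc rb cr).
  have LQ : forall j, j != t0 -> legal_h e j (hpos (fun s : st => if j == rb then pos s t0 else pos s j)).
    move=> j _ h s _ ns; case: (eqVneq j rb) => [->|jr]; last by rewrite /cnbr eqxx.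
    by rewrite /cnbr adj ?orbT // eq_sym nc_tok.
  have := H2 _ LQ.
  set P1 := (fun i => hpos (phi t0 i)); set P2 := upd _ _ _.
  have H0 : state_at P1 (cfg c r rb) 0 = cfg c r rb by [].
  have H1 := step_st cr H0 (ltac:(by rewrite /P1 /hpos Kn stE)).
  rewrite ordS2 in H1.
  have H2' := step_ot cr H1 (ltac:(by rewrite /P1 /hpos Kn stE)).
  rewrite (pay_leaf2 _ _ _ cr H1 H2').
  have J0 : state_at P2 (cfg c r rb) 0 = cfg c r rb by [].
  have J1 := step_ot cr J0 (ltac:(by rewrite /P2 /upd /hpos tokE eqxx pos_cfg tokE stE)).
  rewrite (pay_leaf2 _ _ _ cr J0 J1) /coefv !tokE eqxx /=.
  nra.
Qed.

End P2.

Open Scope R_scope.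
Lemma real_equiv eps gamma : 0 <= eps <= 1/2 -> 0 < gamma < 1 ->
 ((eps <= (1-eps)*gamma^2 /\ (1-eps)*gamma^2 <= gamma/2) <->
  ((0 <= eps < 1/2) /\ (sqrt (eps/(1-eps)) <= gamma <= 1/(2-2*eps)))).
Proof.
move=> [e0 e1] [g0 g1].
have hq : eps / (1 - eps) * (1 - eps) = eps by field; lra.
have q0 : 0 <= eps / (1 - eps) by apply: Rmult_le_pos; [lra | apply/Rlt_le/Rinv_0_lt_compat; lra].
have hw : 1 / (2 - 2 * eps) * (2 - 2 * eps) = 1 by field; lra.
set q := eps / (1 - eps) in hq q0 *; set w := 1 / (2 - 2 * eps) in hw *.
have sq := sqrt_sqrt q q0; have sp := sqrt_pos q.
simpl.
split.
- move=> [A B]; split; first nra.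
  split; last first.
    have G : gamma * (2 - 2 * eps) <= 1 by nra.
    nra.
  rewrite -(sqrt_square gamma); last lra.
  apply: sqrt_le_1_alt; nra.
- move=> [_ [C D]].
  have G : gamma * (2 - 2 * eps) <= 1 by nra.
  split; nra.
Qed.
Close Scope R_scope.

Theorem mainTheorem1 (V : finType) (e : rel V) (gamma eps : R)
  (s0 : state V 2) :
  #|V| = 2 -> simple_connected_graph e ->
  (0 <= eps <= 1/2)%R -> (0 < gamma < 1)%R -> ~~ is_capture s0 ->
  ((exists phi, positional_trigger e gamma eps s0 phi) <->
   ((0 <= eps < 1/2)%R /\
    (sqrt (eps / (1 - eps)) <= gamma <= 1 / (2 - 2 * eps))%R))
  /\
  (forall phi phi', positional_trigger e gamma eps s0 phi ->
                    positional_trigger e gamma eps s0 phi' ->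
     forall (m i : 'I_3) (s : state V 2), reachable e s0 s -> mover s = i ->
       ~~ is_capture s -> phi m i s = phi' m i s).
Proof.
move=> hV hsc He Hg ns.
have [cr _] := nc_pos hV ns.
split; last first.
  move=> phi phi' pt pt' m i s Rs Ms ns'.
  by rewrite (pt_capt hV hsc Hg pt) // (pt_capt hV hsc Hg pt').
move: (pos s0 t0) (pos s0 rb) (mover s0) cr (nc_cfg hV ns) => c r i cr ->.
split.
- move=> [phi pt]; apply/(real_equiv He Hg).
  exact: (necessity hV hsc Hg cr pt).
- move=> /(real_equiv He Hg) [A B].
  exists (fun _ _ => @capt V); split.
  + move=> m; exact: opt_capt.
  + move=> j m; exists (@capt V); split; last by [].
    exists (fun _ => @capt V); split => //; exact: opt_capt.
Qed.
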